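(* Let $\mathcal S=(\mathcal P,\mathcal L)$ be a linear space with $v$ points and constant line size $k$, $2<k<v$; let $G\le\mathrm{Aut}(\mathcal S)$ be transitive on lines, and let $\mathfrak C$ be a non-trivial $G$-invariant partition of $\mathcal P$ with $d$ classes of size $c$ which is $G$-normal and minimal. Let $K:=G_{(\mathfrak C)}$, $S:=\mathrm{Soc}(K)$, $X:=C_G(K)$ and $Y:=C_G(S)$. Then: (a) either (i) $Y\cap K=1$ and $S$ is non-abelian, or (ii) $Y\cap K=S$ and $S$ is elementary abelian; (b) either (i) $X\cap K=1$, or (ii) $X\cap K=K=S$ and $S$ is elementary abelian; (c) if in addition $\mathfrak C$ is maximal, and there is a non-trivial normal subgroup $N$ of $G$ which is intransitive on $\mathcal P$ and satisfies $N\cap S=1$, then there is a second $G$-normal partition $\mathfrak C'$ of $\mathcal P$ with $c$ classes of size $d$ such that $|C\cap C'|=1$ for all $C\in\mathfrak C$, $C'\in\mathfrak C'$.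
   Context: A linear space: a finite set $\mathcal P$ of points and a set $\mathcal L$ of subsets (lines) such that any two distinct points lie on exactly one line and each line has at least two points. $G_{(\mathfrak C)}$ is the kernel of the action of $G$ on $\mathfrak C$. A $G$-invariant partition is $G$-normal if this kernel is transitive on each class; minimal (resp. maximal) if no non-trivial $G$-invariant partition strictly refines it (resp. is strictly coarser than it). $\mathrm{Soc}$ denotes the socle and $C_G(\cdot)$ the centraliser in $G$. *)

(* Defs.v *)
From mathcomp Require Import all_boot all_fingroup all_solvable.
Set Implicit Arguments.
Unset Strict Implicit.
Unset Printing Implicit Defensive.
Local Open Scope group_scope.

Definition linear_space (T : finType) (L : {set {set T}}) : Prop :=
  (forall l, l \in L -> 1 < #|l|) /\
  (forall x y : T, x != y -> exists! l, (l \in L) /\ (x \in l) /\ (y \in l)).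

Definition pimg (T : finType) (g : {perm T}) (A : {set T}) : {set T} :=
  (fun x => g x) @: A.

Definition automorphisms (T : finType) (L : {set {set T}})
    (G : {group {perm T}}) : Prop :=
  forall g, g \in G -> forall l, l \in L -> pimg g l \in L.

Definition line_transitive (T : finType) (L : {set {set T}})
    (G : {group {perm T}}) : Prop :=
  forall l l', l \in L -> l' \in L -> exists2 g, g \in G & pimg g l = l'.

Definition Ginv_partition (T : finType) (G : {group {perm T}})
    (C : {set {set T}}) : Prop :=
  partition C [set: T] /\ forall g, g \in G -> forall B, B \in C -> pimg g B \in C.

Definition nontrivial_partition (T : finType) (C : {set {set T}}) : Prop :=
  C <> [set [set x] | x : T] /\ C <> [set [set: T]].

Definition refines (T : finType) (C' C : {set {set T}}) : Prop :=
  forall B', B' \in C' -> exists2 B, B \in C & B' \subset B.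

(* Kernel G_(C) of the action of G on the classes of C. *)
Definition part_kernel (T : finType) (G : {group {perm T}})
    (C : {set {set T}}) : {set {perm T}} :=
  'C_G(C | ('P)^*).

Definition Gnormal (T : finType) (G : {group {perm T}})
    (C : {set {set T}}) : Prop :=
  Ginv_partition G C /\
  forall B, B \in C -> [transitive part_kernel G C, on B | 'P].

Definition minimal_partition (T : finType) (G : {group {perm T}})
    (C : {set {set T}}) : Prop :=
  forall C', Ginv_partition G C' -> nontrivial_partition C' ->
    refines C' C -> C' = C.

Definition maximal_partition (T : finType) (G : {group {perm T}})
    (C : {set {set T}}) : Prop :=
  forall C', Ginv_partition G C' -> nontrivial_partition C' ->
    refines C C' -> C' = C.

Definition socle (gT : finGroupType) (K : {set gT}) : {set gT} :=
  <<\bigcup_(M : {group gT} | [min M of H | (H :!=: 1) && (H <| K)]) M>>.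

Definition elementary_abelian (gT : finGroupType) (S : {set gT}) : Prop :=
  exists p, p.-abelem S.

(* Main.v *)
Require Import Defs.
From mathcomp Require Import all_boot all_fingroup all_solvable.
From mathcomp Require Import zify.
Set Implicit Arguments.
Unset Strict Implicit.
Unset Printing Implicit Defensive.
Local Open Scope group_scope.

Section Lines.
Variables (T : finType) (L : {set {set T}}).
Hypothesis hL : linear_space L.

Lemma eq_sym_ne (x y : T) : x != y -> y != x. Proof. by rewrite eq_sym. Qed.

Definition ln (x y : T) : {set T} := odflt set0 [pick l in L | (x \in l) && (y \in l)].

Lemma ln_spec x y : x != y -> [/\ ln x y \in L, x \in ln x y & y \in ln x y].
Proof.
move=> xy; rewrite /ln; case: pickP => [l /andP[lL /andP[xl yl]] | nol] //=.
have [l [[lL [xl yl]] _]] := hL.2 x y xy.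
by move: (nol l); rewrite lL xl yl.
Qed.

Lemma line_uniq l x y : l \in L -> x != y -> x \in l -> y \in l -> l = ln x y.
Proof.
move=> lL xy xl yl; have [l' [[l'L [xl' yl']] U]] := hL.2 x y xy.
have [lnL xln yln] := ln_spec xy.
by rewrite -(U l) ?(U (ln x y)).
Qed.

Lemma line_eq l l' x y : l \in L -> l' \in L -> x != y -> x \in l -> y \in l ->
  x \in l' -> y \in l' -> l = l'.
Proof. by move=> *; rewrite (@line_uniq l x y) // (@line_uniq l' x y). Qed.

Variable k : nat.
Hypothesis hk : forall l, l \in L -> #|l| = k.
Hypothesis kv : k < #|T|.
Hypothesis k2 : 2 <= k.

Lemma lines_through_ge x : k <= #|[set l in L | x \in l]|.
Proof.
have [z zx] : exists z, z != x.
  have : 1 < #|T| by lia.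
  rewrite (cardD1 x) inE ltnS lt0n => /pred0Pn[z /andP[zx _]]; by exists z.
have [l1L xl1 zl1] := ln_spec (eq_sym_ne zx).
have [y yl1] : exists y, y \notin ln x z.
  apply/existsP; rewrite -negb_forall; apply/negP => /forallP all1.
  have : #|[set: T]| <= #|ln x z| by apply: subset_leq_card; apply/subsetP=> u _; exact: all1.
  by rewrite cardsT hk //; lia.
have yz : y != z by apply: contraNneq yl1 => ->.
have [muL ymu zmu] := ln_spec yz.
have xmu : x \notin ln y z.
  apply/negP => xmu; apply/negP: yl1; apply/negPn.
  by rewrite (@line_eq (ln x z) (ln y z) x z) //; apply: eq_sym_ne.
rewrite -(hk muL).
have -> : #|ln y z| = #|[set ln x p | p in ln y z]|.
  rewrite card_in_imset // => p q pm qm /= e.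
  have px : p != x by apply: contraNneq xmu => <-.
  have qx : q != x by apply: contraNneq xmu => <-.
  have [pL xp pp] := ln_spec (eq_sym_ne px).
  have [qL xq qq] := ln_spec (eq_sym_ne qx).
  apply/eqP; apply/negP=> /negP pq.
  rewrite -e in qq.
  have := @line_eq (ln x p) (ln y z) p q pL muL pq pp qq pm qm.
  by move=> E; move: xmu; rewrite -E xp.
apply: subset_leq_card; apply/subsetP => _ /imsetP[p pm ->].
have px : p != x by apply: contraNneq xmu => <-.
have [pL xp pp] := ln_spec (eq_sym_ne px).
by rewrite inE pL xp.
Qed.

Lemma lines_ge_points : #|T| <= #|L|.
Proof.
have k0 : 0 < k by apply: leq_trans k2.
rewrite -(leq_pmul2r k0).
have E : \sum_(l in L) #|l| = \sum_(x : T) #|[set l in L | x \in l]|.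
  transitivity (\sum_(l in L) \sum_(x : T | x \in l) 1).
    by apply: eq_bigr => l _; rewrite sum1_card.
  rewrite (exchange_big_dep predT) //=.
  apply: eq_bigr => x _; rewrite -sum1_card; apply: eq_bigl => l; by rewrite inE.
have E2 : \sum_(l in L) #|l| = (#|L| * k)%N.
  by rewrite (eq_bigr (fun _ => k)) ?sum_nat_const // => l lL; rewrite hk.
rewrite -E2 E.
have -> : (#|T| * k)%N = \sum_(x : T) k by rewrite sum_nat_const cardT.
by apply: leq_sum => x _; rewrite lines_through_ge.
Qed.

End Lines.
Section Main.
Variables (T : finType) (L : {set {set T}}) (k c d : nat)
  (G : {group {perm T}}) (C : {set {set T}}).
Hypotheses (hC : Ginv_partition G C) (hnt : nontrivial_partition C)
  (hd : #|C| = d) (hc : forall B, B \in C -> #|B| = c)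
  (hGn : Gnormal G C) (hmin : minimal_partition G C).

Local Notation K := ('C_G(C | ('P)^*)).

Lemma pimgE (g : {perm T}) (A : {set T}) : pimg g A = ('P^*)%act A g.
Proof. by []. Qed.

Lemma pimg_mem (g : {perm T}) (A : {set T}) x : x \in A -> g x \in pimg g A.
Proof. by move=> xA; apply: imset_f. Qed.

Lemma K_fix g B : g \in K -> B \in C -> pimg g B = B.
Proof. by case/setIP=> _ /astabP gC BC; rewrite pimgE gC. Qed.

Lemma K_class g B x : g \in K -> B \in C -> x \in B -> g x \in B.
Proof. by move=> gK BC xB; rewrite -(K_fix gK BC) pimg_mem. Qed.

Lemma partC : partition C [set: T]. Proof. exact: hC.1. Qed.
Lemma coverC : cover C = [set: T]. Proof. by case/and3P: partC => /eqP. Qed.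
Lemma trivC : trivIset C. Proof. by case/and3P: partC. Qed.
Lemma C0 : set0 \notin C. Proof. by case/and3P: partC. Qed.

Lemma pbC x : pblock C x \in C.
Proof. by apply: pblock_mem; rewrite coverC inE. Qed.
Lemma pbx x : x \in pblock C x.
Proof. by rewrite mem_pblock coverC inE. Qed.
Lemma pbE B x : B \in C -> x \in B -> pblock C x = B.
Proof. by move=> BC xB; apply: def_pblock trivC BC xB. Qed.

Lemma C_disj B B' x : B \in C -> B' \in C -> x \in B -> x \in B' -> B = B'.
Proof. by move=> BC B'C xB xB'; rewrite -(pbE BC xB) (pbE B'C xB'). Qed.

Lemma C_setT B : B \in C -> [set: T] \subset B -> False.
Proof.
move=> BC sTB; apply: hnt.2; apply/setP => E; rewrite inE.
apply/idP/eqP => [EC | ->].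
  have /set0Pn[x xE] : E != set0 by apply: contraNneq C0 => <-.
  have BT : B = [set: T] by apply/eqP; rewrite eqEsubset sTB subsetT.
  by rewrite (C_disj EC BC xE) // BT inE.
by have -> : [set: T] = B by apply/eqP; rewrite eqEsubset sTB subsetT.
Qed.

Lemma card_T : #|T| = (c * d)%N.
Proof.
rewrite -cardsT (card_partition partC) (eq_bigr (fun _ => c)) ?sum_nat_const.
  by rewrite hd mulnC.
by move=> B BC; rewrite hc.
Qed.

Lemma c_gt1 (T0 : T) : 1 < c.
Proof.
have BC := pbC T0; rewrite -(hc BC).
case: ltngtP => // c1.
  by move: c1; rewrite ltnS leqn0 cards_eq0 => /eqP e; move: C0; rewrite -e BC.
exfalso; apply: hnt.1; apply/setP => E; apply/idP/imsetP => [EC | [x _ ->]].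
  have /cards1P[x ->] : #|E| == 1%N by rewrite (hc EC) -(hc BC) c1.
  by exists x.
have /cards1P[y ey] : #|pblock C x| == 1%N by rewrite (hc (pbC x)) -(hc BC) c1.
have := pbx x; rewrite ey inE => /eqP xy; subst y; rewrite -ey; exact: pbC.
Qed.


Hypotheses (hL : linear_space L) (hk : forall l, l \in L -> #|l| = k)
  (k2 : 2 < k) (kv : k < #|T|) (hAut : automorphisms L G)
  (hLT : line_transitive L G).

Lemma KG : K \subset G. Proof. exact: subsetIl. Qed.

Lemma nKG : G \subset 'N(K).
Proof.
apply: normsI; first exact: normG.
apply: subset_trans (astab_norm _ _).
apply/subsetP => g gG; apply/astabsP => B /=; apply/idP/idP => BC.
  have gVG : g^-1 \in G by rewrite groupV.
  by have := hC.2 _ gVG _ BC; rewrite pimgE actK.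
exact: hC.2.
Qed.

Lemma somept : exists x : T, true.
Proof. have : 0 < #|T| by lia. by rewrite -cardsT card_gt0 => /set0Pn[x _]; exists x. Qed.

Lemma two_pts (E : {set T}) : 1 < #|E| -> exists p q, [/\ p \in E, q \in E & p != q].
Proof.
move=> E2; have /set0Pn[p pE] : E != set0 by rewrite -card_gt0; lia.
have /set0Pn[q qE] : E :\ p != set0 by rewrite -card_gt0 (cardsD1 p E) pE in E2 *; lia.
by exists p, q; move: qE; rewrite !inE => /andP[qp qE]; rewrite eq_sym.
Qed.

Lemma orbit_trans (A : {group {perm T}}) :
  A \subset K -> G \subset 'N(A) -> A :!=: 1 ->
  forall B, B \in C -> [transitive A, on B | 'P].
Proof.
move=> AK nAG ntA.
set P := orbit 'P A @: [set: T].
have actsA : [acts A, on [set: T] | 'P].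
  by apply/subsetP => a _; apply/astabsP => x; rewrite !inE.
have partP : partition P [set: T] by apply: orbit_partition.
have subO x : orbit 'P A x \subset pblock C x.
  apply/subsetP => _ /orbitP[a aA <-]; apply: K_class (pbC x) (pbx x).
  by apply: (subsetP AK).
have invP : Ginv_partition G P.
  split => // g gG _ /imsetP[x _ ->].
  rewrite -[pimg _ _]/(setact (perm_action T) _ g) setact_orbit.
  have -> : A :^ g = A by apply/normP; apply: (subsetP nAG).
  by apply: imset_f.
have refP : refines P C.
  by move=> _ /imsetP[x _ ->]; exists (pblock C x); [exact: pbC | exact: subO].
have ntP : nontrivial_partition P.
  split.
    move=> eP; move/trivgPn: ntA => [a aA a1].
    have [x ax] : exists x, a x != x.
      apply/existsP; rewrite -negb_forall; apply: contra a1 => /forallP H.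
      by apply/eqP/permP => x; rewrite perm1; apply/eqP; apply: H.
    have : orbit 'P A x \in P by apply: imset_f.
    rewrite eP => /imsetP[z _ ez].
    have xO : x \in orbit 'P A x by apply: orbit_refl.
    have axO : a x \in orbit 'P A x by apply: (mem_orbit 'P x aA).
    by move: xO axO; rewrite ez !inE => /eqP xz /eqP axz; move: ax; rewrite axz xz eqxx.
  move=> eP; have [x0 _] := somept.
  have : orbit 'P A x0 \in P by apply: imset_f.
  rewrite eP inE => /eqP eO.
  by apply: (C_setT (pbC x0)); rewrite -eO; apply: subO.
move=> B BC; rewrite -(hmin invP ntP refP) in BC.
case/imsetP: BC => x _ ->; rewrite /atrans; apply: imset_f; exact: orbit_refl.
Qed.

Lemma c2 : 1 < c.
Proof. have [x0 _] := somept; exact: c_gt1 x0. Qed.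

Section Faith.
Variable A : {group {perm T}}.
Hypotheses (AK : A \subset K) (abA : abelian A)
  (trA : forall B, B \in C -> [transitive A, on B | 'P]).

Lemma AG a : a \in A -> a \in G.
Proof. by move=> aA; apply: (subsetP KG); apply: (subsetP AK). Qed.

Lemma stab_eq E x : E \in C -> x \in E -> 'C_A[x | 'P] = 'C_A(E | 'P).
Proof.
move=> EC xE; apply/setP => a; rewrite !inE; apply: andb_id2l => aA.
rewrite /= sub1set inE.
apply/idP/idP => [/eqP ax | /subsetP aE]; last by have := aE x xE; rewrite inE.
apply/subsetP => y; rewrite inE -(atransP (trA EC) _ xE) => /orbitP[b bA <-] /=.
have cab : commute a b by apply: (centsP abA).
by move: ax; rewrite /aperm -permM -cab permM => ->.
Qed.

Lemma card_W E : E \in C -> (#|'C_A(E | 'P)| * c)%N = #|A|.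
Proof.
move=> EC; have /set0Pn[x xE] : E != set0 by apply: contraNneq C0 => <-.
rewrite -(stab_eq EC xE) -(card_orbit_stab 'P A x) (atransP (trA EC) _ xE) (hc EC).
by rewrite mulnC.
Qed.

Lemma faithful B : B \in C -> 'C_A(B | 'P) = 1.
Proof.
move=> BC; apply/trivgP/subsetP => a aW; rewrite inE.
apply/eqP/permP => y; rewrite perm1; apply/eqP/negPn/negP => ay.
case/setIP: aW => aA /astabP aB.
have aG := AG aA.
have claim : forall x l, x \in B -> l \in L -> x \in l -> pimg a l = l.
  move=> x l xB lL xl.
  have alL : pimg a l \in L by apply: hAut.
  case: (boolP [exists x' in l, (x' \in B) && (x' != x)]).
    case/exists_inP => x' x'l /andP[x'B x'x].
    apply: (line_eq hL alL lL x'x) => //.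
    - by rewrite -{1}(aB x' x'B) pimg_mem.
    - by rewrite -{1}(aB x xB) pimg_mem.
  move=> nox.
  have [p [q [pB qB pq]]] := two_pts (leq_trans c2 (eq_leq (esym (hc BC)))).
  have [l0L pl0 ql0] := ln_spec hL pq.
  have [g gG egl] := hLT l0L lL.
  have EC : pimg g B \in C by apply: hC.2.
  have p'l : g p \in l by rewrite -egl pimg_mem.
  have q'l : g q \in l by rewrite -egl pimg_mem.
  have p'E : g p \in pimg g B by rewrite pimg_mem.
  have q'E : g q \in pimg g B by rewrite pimg_mem.
  have pq' : g p != g q by rewrite (inj_eq perm_inj).
  have sub : 'C_A(pimg g B | 'P) \subset 'C_A[x | 'P].
    apply/subsetP => u /setIP[uA /astabP uE]; apply/setIP; split => //.
    apply/astab1P.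
    have ulL : pimg u l \in L := hAut (AG uA) lL.
    have ul : pimg u l = l.
      apply: (line_eq hL ulL lL pq') => //.
      - by rewrite -{1}(uE _ p'E) pimg_mem.
      - by rewrite -{1}(uE _ q'E) pimg_mem.
    have uxl : u x \in l by rewrite -ul pimg_mem.
    have uxB : u x \in B by apply: K_class BC xB; apply: (subsetP AK).
    apply/eqP; apply: contraR nox => uxx.
    by apply/exists_inP; exists (u x) => //; rewrite uxB.
  rewrite (stab_eq BC xB) in sub.
  have eqW : 'C_A(pimg g B | 'P) = 'C_A(B | 'P).
    apply/eqP; rewrite eqEcard sub /=.
    have := card_W EC; rewrite -(card_W BC) => e.
    by apply: eq_leq; apply/eqP; rewrite -(eqn_pmul2r (ltnW c2)) e.
  have aW' : a \in 'C_A(pimg g B | 'P) by rewrite eqW inE aA; apply/astabP.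
  case/setIP: aW' => _ /astabP aE.
  apply: (line_eq hL alL lL pq') => //.
  - by rewrite -{1}(aE _ p'E) pimg_mem.
  - by rewrite -{1}(aE _ q'E) pimg_mem.
have yB : y \notin B by apply: contra ay => yB; rewrite -{2}(aB y yB).
have yay : y != a y by rewrite eq_sym.
have [muL ymu aymu] := ln_spec hL yay.
have BM : B \subset ln L y (a y).
  apply/subsetP => x xB.
  have xy : x != y by apply: contraNneq yB => <-.
  have [lL xl yl] := ln_spec hL xy.
  have al := claim x _ xB lL xl.
  have ayl : a y \in ln L x y by rewrite -al pimg_mem.
  by rewrite -(line_uniq hL lL yay yl ayl).
exfalso.
pose phi (E : {set T}) := odflt set0 [pick l in L | E \subset l].
have LC : L \subset phi @: C.
  apply/subsetP => l lL.
  have [g gG egl] := hLT muL lL.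
  have EC : pimg g B \in C by apply: hC.2.
  have El : pimg g B \subset l by rewrite -egl; apply: imsetS.
  apply/imsetP; exists (pimg g B) => //.
  rewrite /phi; case: pickP => [l' /andP[l'L El'] | /(_ l)]; last by rewrite lL El.
  have [p [q [pE qE pq]]] := two_pts (leq_trans c2 (eq_leq (esym (hc EC)))).
  by rewrite /= (line_eq hL lL l'L pq) // ?(subsetP El) ?(subsetP El').
have h1 := subset_leq_card LC.
have h2 := leq_imset_card phi C.
have h3 := lines_ge_points hL hk kv (ltnW k2).
have h4 := c2.
have h5 := card_T.
have h6 : 0 < #|T| by apply: leq_ltn_trans kv.
move: h1 h2 h3 h4 h5 h6; rewrite hd.
move: #|T| #|L| #|phi @: C| => n1 n2 n3.
clear -n1; nia.
Qed.
End Faith.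


Lemma abn_props (A : {group {perm T}}) :
  A \subset K -> G \subset 'N(A) -> abelian A -> A :!=: 1 ->
  [/\ forall B, B \in C -> [transitive A, on B | 'P], #|A| = c &
      forall B, B \in C -> 'C_A(B | 'P) = 1].
Proof.
move=> AK nAG abA ntA.
have trA := orbit_trans AK nAG ntA.
have fA := faithful AK abA trA.
split => //.
have [x0 _] := somept.
by rewrite -(card_W abA trA (pbC x0)) (fA _ (pbC x0)) cards1 mul1n.
Qed.

Lemma abn_elem (A : {group {perm T}}) :
  A \subset K -> G \subset 'N(A) -> abelian A -> A :!=: 1 ->
  exists p, p.-abelem A.
Proof.
move=> AK nAG abA ntA.
have [_ cA _] := abn_props AK nAG abA ntA.
have A1 : 1 < #|A| by rewrite cA c2.
set p := pdiv #|A|.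
have pr := pdiv_prime A1.
have [x xA ox] := Cauchy pr (pdiv_dvd #|A|).
set P := 'Ohm_1('O_p(A)).
have Pch : P \char A := char_trans (Ohm_char 1 _) (pcore_char p A).
have nPG : G \subset 'N(P) := char_norm_trans Pch nAG.
have PA : P \subset A := char_sub Pch.
have abP : abelian P := abelianS PA abA.
have ntP : P :!=: 1.
  rewrite Ohm1_eq1; apply/trivgPn; exists x; last by rewrite -order_gt1 ox prime_gt1.
  apply: (subsetP (pcore_max _ _)) (cycle_id x).
    by rewrite /pgroup -orderE ox pnat_id.
  by rewrite -sub_abelian_normal // cycle_subG.
have [_ cP _] := abn_props (subset_trans PA AK) nPG abP ntP.
have PeA : P = A by apply/eqP; rewrite eqEcard PA cP cA leqnn.
exists p; rewrite -PeA; apply: Ohm1_abelem; first exact: pcore_pgroup.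
exact: abelianS (pcore_sub _ _) abA.
Qed.

Local Notation minK M := (mingroup M (fun H : {group {perm T}} => (H :!=: 1) && (H <| K))).

Lemma minK_sub (M : {group {perm T}}) : minK M -> M \subset socle K.
Proof. by move=> mM; apply: sub_gen; apply: (bigcup_sup M). Qed.

Lemma socle_sub : socle K \subset K.
Proof.
rewrite gen_subG; apply/bigcupsP => M mM.
by case/andP: (mingroupp mM) => _ /normal_sub.
Qed.

Lemma normal_min (H : {group {perm T}}) : H :!=: 1 -> H <| K ->
  exists2 M : {group {perm T}}, minK M & M \subset H.
Proof.
move=> ntH nH.
have [M mM sMH] := mingroup_exists (gP := fun H : {group {perm T}} => (H :!=: 1) && (H <| K)) (G := H) (introT andP (conj ntH nH)).
by exists M.
Qed.

Lemma KGn g : g \in G -> K :^ g = K.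
Proof. by move=> gG; apply/normP; apply: (subsetP nKG). Qed.

Lemma minK_conj (M : {group {perm T}}) g : g \in G -> minK M -> minK (M :^ g)%G.
Proof.
move=> gG /mingroupP[/andP[ntM nM] minM]; apply/mingroupP; split.
  by rewrite /= conjsg_eq1 ntM -(KGn gG) normalJ.
move=> H /andP[ntH nH] sH.
have gVG : g^-1 \in G by rewrite groupV.
have := minM (H :^ g^-1)%G.
rewrite /= conjsg_eq1 ntH -(KGn gVG) normalJ nH sub_conjgV => /(_ isT sH) e.
by rewrite /= -e conjsgKV.
Qed.

Lemma nSG : G \subset 'N(socle K).
Proof.
apply: norms_gen; apply/normsP => g gG.
apply/eqP; rewrite eqEcard cardJg leqnn andbT.
apply/subsetP => y; rewrite mem_conjg => /bigcupP[M mM yM].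
apply/bigcupP; exists (M :^ g)%G; first exact: minK_conj.
by rewrite /= -(conjgKV g y) memJ_conjg.
Qed.

Lemma socle_nt : socle K :!=: 1.
Proof.
have [x0 _] := somept.
have /trivgPn[g gK g1] : K :!=: 1.
  apply/trivgPn.
  have BC := pbC x0.
  have [p [q [pB qB pq]]] := two_pts (leq_trans c2 (eq_leq (esym (hc BC)))).
  have [g gK eq] := atransP2 (hGn.2 _ BC) pB qB.
  by exists g => //; apply: contraNneq pq => g1; rewrite eq g1 /= /aperm perm1.
have ntK : K :!=: 1 by apply/trivgPn; exists g.
have [M mM _] := normal_min ntK (normal_refl _).
case/andP: (mingroupp mM) => ntM _.
apply: contraNneq ntM => e; rewrite -subG1 -e; exact: minK_sub.
Qed.

Lemma cent_reg (A : {group {perm T}}) B g :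
  abelian A -> [transitive A, on B | 'P] -> B \in C -> g \in K -> g \in 'C(A) ->
  exists2 a, a \in A & forall y, y \in B -> g y = a y.
Proof.
move=> abA trA BC gK gA.
have /set0Pn[x xB] : B != set0 by apply: contraNneq C0 => <-.
have gxB : g x \in B := K_class gK BC xB.
have [a aA eq] := atransP2 trA xB gxB.
exists a => // y yB.
have [b bA ->] := atransP2 trA xB yB.
rewrite /= /aperm.
have cgb : commute g b by apply: (centP gA).
have cab : commute a b by apply: (centsP abA).
have e1 : g (b x) = b (g x) by rewrite -permM -cgb permM.
by rewrite e1 eq /= /aperm -!permM cab.
Qed.

Lemma ab_cent (A H : {group {perm T}}) :
  A \subset K -> abelian A -> (forall B, B \in C -> [transitive A, on B | 'P]) ->
  H \subset K -> H \subset 'C(A) -> abelian H.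
Proof.
move=> AK abA trA HK HA; apply/centsP => s sH t tH; apply/permP => x.
have BC := pbC x; have xB := pbx x.
have [a aA ea] := cent_reg abA (trA _ BC) BC (subsetP HK s sH) (subsetP HA s sH).
have [b bA eb] := cent_reg abA (trA _ BC) BC (subsetP HK t tH) (subsetP HA t tH).
have axB : a x \in pblock C x by apply: K_class BC xB; apply: (subsetP AK).
have bxB : b x \in pblock C x by apply: K_class BC xB; apply: (subsetP AK).
have cab : commute a b by apply: (centsP abA).
by rewrite !permM (ea x xB) (eb x xB) (eb _ axB) (ea _ bxB) -!permM cab.
Qed.

Definition SG : {group {perm T}} := [group of socle K].
Lemma SGE : socle K = SG. Proof. by []. Qed.

Lemma SK : SG \subset K. Proof. exact: socle_sub. Qed.
Lemma SGG : SG \subset G. Proof. exact: subset_trans SK KG. Qed.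
Lemma nSGG : G \subset 'N(SG). Proof. exact: nSG. Qed.
Lemma SG_nt : SG :!=: 1. Proof. exact: socle_nt. Qed.

Lemma part_a :
  ('C_G(socle K) :&: K = 1 /\ ~~ abelian (socle K)) \/
  ('C_G(socle K) :&: K = socle K /\ elementary_abelian (socle K)).
Proof.
rewrite SGE.
set Z := ('C_G(SG) :&: K)%G.
have ZK : Z \subset K by apply: subsetIr.
have nZG : G \subset 'N(Z).
  by apply: normsI; [apply: normsI; [apply: normG | apply: norms_cent nSGG] | apply: nKG].
have ZC : Z \subset 'C(SG) by apply: subset_trans (subsetIl _ _) (subsetIr _ _).
case: (eqVneq (Z : {set _}) 1) => [Z1 | ntZ].
  left; split => //; apply/negP => abS.
  have : SG \subset Z by rewrite subsetI SK andbT subsetI SGG.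
  by rewrite Z1 subG1 (negbTE SG_nt).
right.
have nZK : Z <| K by rewrite /normal ZK (subset_trans KG nZG).
have [M mM MZ] := normal_min ntZ nZK.
set ZS := 'Z(SG)%G.
have ZSK : ZS \subset K by apply: subset_trans (subsetIl _ _) SK.
have nZSG : G \subset 'N(ZS) by apply: normsI nSGG (norms_cent nSGG).
have abZS : abelian ZS by apply: center_abelian.
have ntZS : ZS :!=: 1.
  case/andP: (mingroupp mM) => ntM _.
  apply: contraNneq ntM => e; rewrite -subG1 -e /= subsetI.
  by rewrite (minK_sub mM) (subset_trans MZ ZC).
have [trZS _ _] := abn_props ZSK nZSG abZS ntZS.
have abS : abelian SG.
  apply: (ab_cent ZSK abZS trZS SK); rewrite centsC; exact: subsetIr.
have [trS cS _] := abn_props SK nSGG abS SG_nt.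
have SZ : SG \subset Z by rewrite subsetI SK andbT subsetI SGG.
have abZ : abelian Z := ab_cent SK abS trS ZK ZC.
have ntZ' : Z :!=: 1 by [].
have [_ cZ _] := abn_props ZK nZG abZ ntZ'.
split; first by apply/eqP; rewrite eq_sym eqEcard SZ cZ cS leqnn.
exact: abn_elem SK nSGG abS SG_nt.
Qed.

Lemma part_b :
  'C_G(K) :&: K = 1 \/
  ('C_G(K) :&: K = K /\ K = socle K /\ elementary_abelian (socle K)).
Proof.
rewrite SGE.
set KG' := ('C_G(C | ('P)^*))%G.
set Z := ('C_G(KG') :&: KG')%G.
have ZK : Z \subset K by apply: subsetIr.
have nZG : G \subset 'N(Z).
  by apply: normsI; [apply: normsI; [apply: normG | apply: norms_cent nKG] | apply: nKG].
have ZC : Z \subset 'C(KG') by apply: subset_trans (subsetIl _ _) (subsetIr _ _).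
case: (eqVneq (Z : {set _}) 1) => [Z1 | ntZ]; [by left | right].
have abZ : abelian Z by apply: subset_trans ZC (centS ZK).
have [trZ _ _] := abn_props ZK nZG abZ ntZ.
have abK : abelian KG'.
  apply: (ab_cent ZK abZ trZ (subxx _)); rewrite centsC; exact: ZC.
have ntK : KG' :!=: 1.
  apply: contraNneq SG_nt => e; rewrite -subG1 -e; exact: SK.
have [_ cK _] := abn_props (subxx KG') nKG abK ntK.
have abS : abelian SG := abelianS SK abK.
have [_ cS _] := abn_props SK nSGG abS SG_nt.
have KZ : KG' \subset Z by rewrite subsetI subxx andbT subsetI KG; exact: abK.
have eKS : KG' :=: SG by apply/eqP; rewrite eq_sym eqEcard SK cK cS leqnn.
split; first by apply/eqP; rewrite eqEsubset ZK KZ.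
split; first exact: eKS.
exact: abn_elem SK nSGG abS SG_nt.
Qed.

Lemma orbit_pimg (A : {group {perm T}}) g x :
  g \in G -> G \subset 'N(A) -> pimg g (orbit 'P A x) = orbit 'P A (g x).
Proof.
move=> gG nAG.
rewrite -[pimg _ _]/(setact (perm_action T) _ g) setact_orbit.
by have -> : A :^ g = A by apply/normP; apply: (subsetP nAG).
Qed.

Lemma orbit_fix (A : {group {perm T}}) a x :
  a \in A -> pimg a (orbit 'P A x) = orbit 'P A x.
Proof.
move=> aA; rewrite -[pimg _ _]/(setact (perm_action T) _ a) setact_orbit.
by rewrite conjGid // orbit_act.
Qed.

Lemma orbits_part (A : {group {perm T}}) : partition (orbit 'P A @: [set: T]) [set: T].
Proof.
apply: orbit_partition.
by apply/subsetP => a _; apply/astabsP => x; rewrite !inE.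
Qed.

Lemma orbits_Ginv (A : {group {perm T}}) :
  G \subset 'N(A) -> Ginv_partition G (orbit 'P A @: [set: T]).
Proof.
move=> nAG; split; first exact: orbits_part.
move=> g gG _ /imsetP[x _ ->]; rewrite orbit_pimg //; exact: imset_f.
Qed.

Lemma orbits_ns (A : {group {perm T}}) :
  A :!=: 1 -> orbit 'P A @: [set: T] <> [set [set x] | x : T].
Proof.
move=> ntA eP; move/trivgPn: ntA => [a aA a1].
have [x ax] : exists x, a x != x.
  apply/existsP; rewrite -negb_forall; apply: contra a1 => /forallP H.
  by apply/eqP/permP => x; rewrite perm1; apply/eqP; apply: H.
have : orbit 'P A x \in orbit 'P A @: [set: T] by apply: imset_f.
rewrite eP => /imsetP[z _ ez].
have xO : x \in orbit 'P A x by apply: orbit_refl.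
have axO : a x \in orbit 'P A x by apply: (mem_orbit 'P x aA).
by move: xO axO; rewrite ez !inE => /eqP xz /eqP axz; move: ax; rewrite axz xz eqxx.
Qed.

Lemma pblock_pimg g x : g \in G -> pimg g (pblock C x) = pblock C (g x).
Proof. by move=> gG; rewrite (pbE (hC.2 _ gG _ (pbC x)) (pimg_mem g (pbx x))). Qed.

Lemma inK_of g : g \in G -> (forall B, B \in C -> pimg g B = B) -> g \in K.
Proof. by move=> gG gB; rewrite inE gG; apply/astabP => B BC; rewrite -pimgE gB. Qed.

Section PartC.
Variable N : {group {perm T}}.
Hypotheses (hmax : maximal_partition G C) (nNG : N <| G) (ntN : N :!=: 1)
  (intrN : ~~ [transitive N, on [set: T] | 'P]) (NS : N :&: socle K = 1).

Lemma NG : N \subset G. Proof. exact: normal_sub nNG. Qed.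
Lemma nN : G \subset 'N(N). Proof. exact: normal_norm nNG. Qed.

Lemma NK1 : N :&: K = 1.
Proof.
apply/eqP; apply/negPn/negP => ntH.
have nHK : (N :&: K)%G <| K.
  rewrite /normal subsetIr /=; apply: normsI; last exact: normG.
  exact: subset_trans KG nN.
have [M mM MH] := normal_min ntH nHK.
case/andP: (mingroupp mM) => ntM _.
apply: (negP ntM); rewrite -subG1 -NS subsetI (minK_sub mM) andbT.
exact: subset_trans MH (subsetIl _ _).
Qed.

Lemma N_not_K : ~ (forall n, n \in N -> forall B, B \in C -> pimg n B = B).
Proof.
move=> H; apply/negP: ntN; rewrite negbK -subG1 -NK1 subsetI subxx /=.
by apply/subsetP => n nN'; apply: inK_of; [apply: (subsetP NG) | apply: H].
Qed.

Local Notation D := (orbit 'P N @: [set: T]).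

Lemma D_nt : nontrivial_partition D.
Proof.
split; first exact: orbits_ns.
move=> eD; apply/negP: intrN; rewrite negbK.
have [x0 _] := somept.
have : orbit 'P N x0 \in D by apply: imset_f.
rewrite eD inE => /eqP eO.
by rewrite /atrans; apply/imsetP; exists x0; rewrite ?inE ?eO.
Qed.

Lemma meet1 x y : y \in pblock C x -> y \in orbit 'P N x -> y = x.
Proof.
move=> yB yO.
pose f z := (pblock C z, orbit 'P N z).
pose Mt := preim_partition f [set: T].
pose blk z := [set y in [set: T] | f z == f y].
have blkE z : blk z = pblock C z :&: orbit 'P N z.
  apply/setP => w; rewrite !inE /f xpair_eqE.
  rewrite andTb; apply/andP/andP => [[/eqP e1 /eqP e2] | [wB wO]].
    by rewrite e1 e2 pbx orbit_refl.
  by rewrite (pbE (pbC z) wB) eqxx; move/orbit_eqP: wO => ->.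
have MtE B : (B \in Mt) = [exists z, B == blk z].
  apply/imsetP/existsP => [[z _ ->] | [z /eqP ->]]; first by exists z.
  by exists z.
have partMt : partition Mt [set: T] by apply: preim_partitionP.
have invMt : Ginv_partition G Mt.
  split => // g gG B; rewrite !MtE => /existsP[z /eqP ->].
  apply/existsP; exists (g z); rewrite !blkE.
  rewrite /pimg imsetI; last by move=> u v _ _; apply: perm_inj.
  by rewrite -/(pimg g _) -/(pimg g _) pblock_pimg // orbit_pimg // nN.
have refMt : refines Mt C.
  move=> B; rewrite MtE => /existsP[z /eqP ->]; exists (pblock C z); first exact: pbC.
  by rewrite blkE subsetIl.
have xblk : forall z, z \in blk z by move=> z; rewrite blkE inE pbx orbit_refl.
have blkMt z : blk z \in Mt by rewrite MtE; apply/existsP; exists z.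
case: (eqVneq Mt [set [set w] | w : T]) => [eS | nS].
  have := blkMt x; rewrite eS => /imsetP[w _ ew].
  have : y \in blk x by rewrite blkE inE yB.
  by rewrite ew inE => /eqP ->; have := xblk x; rewrite ew inE => /eqP.
case: (eqVneq Mt [set [set: T]]) => [eT | nT].
  have := blkMt x; rewrite eT inE => /eqP e.
  exfalso; apply: (C_setT (pbC x)); rewrite -e blkE; exact: subsetIl.
have eMt : Mt = C by apply: hmin => //; split; apply/eqP.
exfalso.
have refD : refines C D.
  move=> B; rewrite -eMt MtE => /existsP[z /eqP ->].
  exists (orbit 'P N z); first exact: imset_f.
  by rewrite blkE subsetIr.
have eD : D = C by apply: hmax => //; [exact: orbits_Ginv nN | exact: D_nt].
apply: N_not_K => n nN' B; rewrite -eD => /imsetP[z _ ->].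
exact: orbit_fix.
Qed.

Lemma N_meets x B : B \in C -> exists2 n, n \in N & n x \in B.
Proof.
move=> BC.
set KG' := ('C_G(C | ('P)^*))%G.
set NK := (N <*> KG')%G.
have nNKG : G \subset 'N(NK) by apply: normsY; [exact: nN | exact: nKG].
have KNK : KG' \subset NK by apply: joing_subr.
have NNK : N \subset NK by apply: joing_subl.
pose J := orbit 'P NK @: [set: T].
have refJ : refines C J.
  move=> E EC; have /set0Pn[z zE] : E != set0 by apply: contraNneq C0 => <-.
  exists (orbit 'P NK z); first exact: imset_f.
  rewrite -(atransP (hGn.2 E EC) _ zE); exact: imsetS.
have ntNK : NK :!=: 1.
  apply: contraNneq SG_nt => e; rewrite -subG1 -e; exact: subset_trans SK KNK.
case: (eqVneq J [set [set: T]]) => [eT | nT].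
  have /set0Pn[y yB] : B != set0 by apply: contraNneq C0 => <-.
  have : orbit 'P NK x \in J by apply: imset_f.
  rewrite eT inE => /eqP eO.
  have : y \in orbit 'P NK x by rewrite eO inE.
  case/orbitP => a; rewrite /= norm_joinEr; last exact: subset_trans KG nN.
  case/mulsgP => n kk nN' kK -> {a}; rewrite /aperm permM => eky.
  exists n => //.
  have kVK : kk^-1 \in KG' by rewrite groupV.
  by rewrite -(permK kk (n x)) eky; apply: K_class kVK BC yB.
exfalso.
have eJ : J = C.
  apply: hmax => //; first exact: orbits_Ginv.
  by split; [exact: orbits_ns | apply/eqP].
apply: N_not_K => n nN' E; rewrite -eJ => /imsetP[z _ ->].
by apply: orbit_fix; apply: (subsetP NNK).
Qed.

Lemma orbN_act n x : n \in N -> orbit 'P N (n x) = orbit 'P N x.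
Proof. by move=> nN'; apply: (orbit_act 'P x nN'). Qed.

Lemma part_c_concl : exists C' : {set {set T}},
  [/\ Gnormal G C', #|C'| = c, (forall B', B' \in C' -> #|B'| = d) &
      forall B B', B \in C -> B' \in C' -> #|B :&: B'| = 1%N].
Proof.
exists D; split.
- split; first exact: orbits_Ginv nN.
  move=> _ /imsetP[x _ ->].
  have NKd : N \subset part_kernel G D.
    apply/subsetP => n nN'; rewrite inE (subsetP NG) //=.
    apply/astabP => _ /imsetP[z _ ->]; rewrite -pimgE; exact: orbit_fix.
  rewrite /atrans; apply/imsetP; exists x; first exact: orbit_refl.
  apply/eqP; rewrite eqEsubset imsetS //=.
  apply/subsetP => _ /imsetP[u uK ->].
  case/setIP: uK => _ /astabP uD.
  have := uD (orbit 'P N x) (imset_f _ (in_setT x)); rewrite -pimgE => e.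
  by rewrite -e /= /aperm pimg_mem // orbit_refl.
- have [x0 _] := somept.
  have -> : D = (fun y => orbit 'P N y) @: pblock C x0.
    apply/eqP; rewrite eqEsubset; apply/andP; split; apply/subsetP => _ /imsetP[z _ ->].
      have [n nN' nz] := N_meets z (pbC x0).
      by rewrite -(orbN_act z nN'); apply: imset_f.
    exact: imset_f.
  rewrite card_in_imset ?hc ?pbC // => y y' yB y'B /= e.
  apply: esym; apply: meet1.
    by rewrite (pbE (pbC x0) yB).
  by rewrite e orbit_refl.
- move=> _ /imsetP[x _ ->]; rewrite -hd.
  have -> : C = (fun y => pblock C y) @: orbit 'P N x.
    apply/eqP; rewrite eqEsubset; apply/andP; split; apply/subsetP => B.
      move=> BC; have [n nN' nB] := N_meets x BC.
      apply/imsetP; exists (n x); first exact: (mem_orbit 'P x nN').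
      by rewrite (pbE BC nB).
    by case/imsetP => z _ ->; exact: pbC.
  rewrite [RHS]card_in_imset // => y y' yO y'O /= e.
  apply: esym; apply: meet1; first by rewrite e pbx.
  by move/orbit_eqP: yO => ->.
- move=> B _ BC /imsetP[x _ ->].
  have [n nN' nB] := N_meets x BC.
  have -> : B :&: orbit 'P N x = [set n x].
    apply/setP => w; rewrite !inE; apply/andP/eqP => [[wB wO] | ->].
      apply: meet1; first by rewrite (pbE BC nB).
      by rewrite orbN_act.
    by split => //; apply: (mem_orbit 'P x nN').
  exact: cards1.
Qed.

End PartC.

End Main.

Unset Implicit Arguments.
Set Strict Implicit.

Theorem lemma8p2 (T : finType) (L : {set {set T}}) (k c d : nat)
  (G : {group {perm T}}) (C : {set {set T}}) :
  linear_space L ->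
  (forall l, l \in L -> #|l| = k) ->
  2 < k -> k < #|T| ->
  automorphisms L G ->
  line_transitive L G ->
  Ginv_partition G C -> nontrivial_partition C ->
  #|C| = d -> (forall B, B \in C -> #|B| = c) ->
  Gnormal G C -> minimal_partition G C ->
  let K := part_kernel G C in
  let S := socle K in
  let X := 'C_G(K) in
  let Y := 'C_G(S) in
  (* (a) *)
  ((Y :&: K = 1 /\ ~~ abelian S) \/ (Y :&: K = S /\ elementary_abelian S)) /\
  (* (b) *)
  (X :&: K = 1 \/ (X :&: K = K /\ K = S /\ elementary_abelian S)) /\
  (* (c) *)
  (maximal_partition G C ->
   (exists N : {group {perm T}},
      [/\ N <| G, N :!=: 1, ~~ [transitive N, on [set: T] | 'P] & N :&: S = 1]) ->
   exists C' : {set {set T}},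
     [/\ Gnormal G C', #|C'| = c, (forall B', B' \in C' -> #|B'| = d) &
         forall B B', B \in C -> B' \in C' -> #|B :&: B'| = 1%N]).
Proof.
move=> hL hk k2 kv hAut hLT hC hnt hd hc hGn hmin K S X Y.
split; [| split].
- exact: (part_a hC hnt hd hc hGn hmin hL hk k2 kv hAut hLT).
- exact: (part_b hC hnt hd hc hGn hmin hL hk k2 kv hAut hLT).
- move=> hmax [N [nNG ntN intrN NS]].
  exact: (part_c_concl hC hnt hd hc hGn hmin k2 kv hmax nNG ntN intrN NS).
Qed.
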